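(* For every $f_0>1$, $$\beta(f_0)\le\frac{\pi}{2^{1/2}}+(f_0-1)^{1/2},\qquad\text{where }\ \beta(f_0)=\frac12\int_{\phi_*(f_0)}^{\phi^*(f_0)}\frac{d\phi}{\sqrt{f_0-f(\phi)}}.$$
   Context: Let $f(\phi)=e^\phi-\phi$. For $f_1\ge1$, $\phi_*(f_1)\le0\le\phi^*(f_1)$ denote the two solutions $\phi$ of $f(\phi)=f_1$. *)

(* Defs.v *)
From Stdlib Require Import Reals.
From Coquelicot Require Import Coquelicot.
Open Scope R_scope.

Definition fpot (phi : R) : R := exp phi - phi.

Definition beta_integrand (f0 : R) (phi : R) : R := / sqrt (f0 - fpot phi).

(* Main.v *)
Require Import Defs.
From Stdlib Require Import Reals Lra Psatz Classical.
From Coquelicot Require Import Coquelicot.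
Open Scope R_scope.

Lemma mvt_le (h h' : R -> R) a b :
  a <= b -> (forall c, a <= c <= b -> is_derive h c (h' c)) ->
  (forall c, a <= c <= b -> 0 <= h' c) -> h a <= h b.
Proof.
  intros Hab Hd Hp. destruct (Req_dec a b) as [->|Hne]; [lra|].
  destruct (MVT_cor2 h h' a b) as [c [Hc1 Hc2]]; [lra| |].
  - intros c Hc. apply is_derive_Reals. auto.
  - assert (0 <= h' c) by (apply Hp; lra). nra.
Qed.

Lemma right_bound f0 hi x : fpot hi = f0 -> x <= hi -> (hi^2 - x^2)/2 <= f0 - fpot x.
Proof.
  intros Hhi Hx.
  assert (H := mvt_le (fun t => exp t - t - t^2/2) (fun t => exp t - 1 - t) x hi Hx).
  simpl in H. unfold fpot in *.
  assert (exp x - x - x*(x*1)/2 <= exp hi - hi - hi*(hi*1)/2).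
  { apply H.
    - intros c _. auto_derive. { exact I. } field.
    - intros c _. generalize (exp_ineq1_le c); lra. }
  lra.
Qed.

Lemma chord_bound f0 lo x : fpot lo = f0 -> lo < 0 -> lo <= x <= 0 ->
  (f0 - 1) * ((x - lo) / (- lo)) <= f0 - fpot x.
Proof.
  intros Hlo Hl Hx. unfold fpot in *.
  set (s := (x - lo) / (- lo)).
  assert (Hs : (1 - s) * lo = x) by (unfold s; field; lra).
  assert (Hs' : s * (- lo) = x - lo) by (unfold s; field; lra).
  assert (H0 : 0 <= s <= 1) by (split; nra).
  assert (H1 := exp_ineq1_le (- x)).
  assert (H2 := exp_ineq1_le (lo - x)).
  assert (Hm : exp (-x) * exp x = 1) by (rewrite <- exp_plus; replace (-x + x) with 0 by ring; apply exp_0).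
  assert (Hm2 : exp (lo - x) * exp x = exp lo) by (rewrite <- exp_plus; f_equal; ring).
  assert (E: exp x <= s + (1 - s) * exp lo).
  { assert (Hex : 0 < exp x) by apply exp_pos.
    assert (s * exp (-x) + (1-s) * exp (lo - x) >= 1) by nra.
    nra. }
  nra.
Qed.

Lemma polyA L u : 0 <= u -> 2*u <= L -> (2+L)^2 <= ((2+L)^2 - 2*u*(4+L))*(1+u)^2.
Proof. intros. set (w := L - 2*u). replace L with (2*u + w) by (unfold w; ring).
  assert (0 <= w) by (unfold w; lra).
  assert (E : ((2+(2*u+w))^2 - 2*u*(4+(2*u+w)))*(1+u)^2 - (2+(2*u+w))^2
     = 4*w*(1+u)*u + w^2*(u*(2+u)) + 2*u*w*(1+u)^2) by ring.
  assert (0 <= 4*w*(1+u)*u) by (repeat apply Rmult_le_pos; lra).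
  assert (0 <= w^2*(u*(2+u))) by (apply Rmult_le_pos; [apply pow2_ge_0|apply Rmult_le_pos; lra]).
  assert (0 <= 2*u*w*(1+u)^2) by (repeat apply Rmult_le_pos; try lra; apply pow2_ge_0).
  lra. Qed.

Lemma exp_chordA L c : 0 < L -> -L <= c <= 0 ->
  (2+L)^2 * (exp c - 1) <= (4+L) * c.
Proof.
  intros HL Hc. set (u := - c / 2).
  assert (Hu : 0 <= u /\ 2*u <= L) by (unfold u; lra).
  set (y := exp (c/2)).
  assert (Hy : 0 < y) by apply exp_pos.
  assert (Hyy : exp c = y * y) by (unfold y; rewrite <- exp_plus; f_equal; field).
  assert (H1 := exp_ineq1_le (- (c/2))).
  assert (Hm : exp (- (c/2)) * y = 1) by (unfold y; rewrite <- exp_plus; replace (- (c/2) + c/2) with 0 by ring; apply exp_0).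
  assert (Hy1 : y * (1 + u) <= 1) by (unfold u in *; nra).
  assert (P := polyA L u (proj1 Hu) (proj2 Hu)).
  rewrite Hyy. replace c with (-2*u) by (unfold u; field).
  assert (Hy2 : (y*(1+u))^2 <= 1).
  { assert (0 <= y*(1+u)) by (apply Rmult_le_pos; lra). nra. }
  assert (0 <= (2+L)^2 - 2*u*(4+L)).
  { assert (0 < (1+u)^2) by nra. nra. }
  nra.
Qed.

Lemma leftA_bound f0 lo x : fpot lo = f0 -> lo < 0 -> lo <= x <= 0 ->
  ((4 - lo) / (2 - lo)^2) * (lo^2 - x^2) / 2 <= f0 - fpot x.
Proof.
  intros Hlo Hl Hx. set (a := (4 - lo) / (2 - lo)^2).
  assert (H := mvt_le (fun t => - (exp t - t - a * t^2/2)) (fun t => - (exp t - 1 - a * t)) lo x (proj1 Hx)).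
  simpl in H. unfold fpot in *.
  assert (- (exp lo - lo - a * (lo*(lo*1))/2) <= - (exp x - x - a*(x*(x*1))/2)).
  { apply H.
    - intros c _. auto_derive. { exact I. } field.
    - intros c Hc. assert (E := exp_chordA (-lo) c ltac:(lra) ltac:(lra)).
      assert (Hp : 0 < (2 - lo)^2) by nra.
      replace (4 + - lo) with (4 - lo) in E by ring. replace (2 + - lo) with (2 - lo) in E by ring.
      replace (a*c) with (((4-lo)*c) * / (2-lo)^2) by (unfold a; field; lra).
      replace (exp c - 1) with (((2-lo)^2*(exp c - 1)) * / (2-lo)^2) by (field; lra).
      assert (((2-lo)^2*(exp c - 1)) * / (2-lo)^2 <= ((4-lo)*c) * / (2-lo)^2).
      { apply Rmult_le_compat_r; [left; apply Rinv_0_lt_compat; lra| lra]. }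
      lra. }
  simpl. lra.
Qed.

Lemma ball_R (l e y : R) : Rabs (y - l) < e -> ball l e y.
Proof. intros H. exact H. Qed.

Lemma exRInt_cont (g : R -> R) a b : a <= b -> (forall x, a <= x <= b -> continuous g x) -> ex_RInt g a b.
Proof. intros Hab H. apply (ex_RInt_continuous (V:=R_CompleteNormedModule)). intros z Hz. apply H.
  rewrite Rmin_left, Rmax_right in Hz; lra. Qed.

Lemma half_left (g : R -> R) lo c B : lo < c ->
  (forall x, lo < x <= c -> continuous g x) ->
  (forall x, lo < x <= c -> 0 <= g x) ->
  (forall a, lo < a < c -> RInt g a c <= B) ->
  exists l, is_RInt_gen g (at_right lo) (at_point c) l /\ l <= B.
Proof.
  intros Hlc Hc Hp HB.
  set (E := fun y => exists a, lo < a < c /\ y = RInt g a c).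
  assert (Hb : bound E) by (exists B; intros y [a [Ha ->]]; auto).
  assert (Hne : exists y, E y) by (exists (RInt g ((lo+c)/2) c); exists ((lo+c)/2); split; [lra|auto]).
  destruct (completeness E Hb Hne) as [l [Hub Hlub]].
  assert (Hex : forall a b, lo < a -> a <= b -> b <= c -> ex_RInt g a b).
  { intros a b H1 H2 H3. apply exRInt_cont; auto. intros; apply Hc; lra. }
  assert (Hmono : forall a a', lo < a -> a <= a' -> a' <= c -> RInt g a' c <= RInt g a c).
  { intros a a' H1 H2 H3. rewrite <- (RInt_Chasles g a a' c) by (apply Hex; lra).
    assert (0 <= RInt g a a'). { apply RInt_ge_0; auto. intros; apply Hp; lra. }
    unfold plus in *; simpl in *. lra. }
  exists l. split.
  2:{ apply Hlub. intros y [a [Ha ->]]. auto. }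
  intros P [eps HP].
  assert (Hexa : exists a0, lo < a0 < c /\ l - eps < RInt g a0 c).
  { destruct (Rlt_dec (l - eps) (RInt g ((lo+c)/2) c)) as [Hlt|Hge].
    - exists ((lo+c)/2); split; [lra|auto].
    - apply NNPP. intros Hn.
      assert (l <= l - eps).
      { apply Hlub. intros y [a [Ha ->]].
        destruct (Rle_dec (RInt g a c) (l - eps)) as [|Hr]; auto.
        exfalso; apply Hn; exists a; split; [auto|lra]. }
      destruct eps as [e He]; simpl in *; lra. }
  destruct Hexa as [a0 [Ha0 Hla0]].
  apply Filter_prod with (Q := fun x => lo < x < a0) (R := fun y => y = c).
  - exists (mkposreal (a0 - lo) ltac:(lra)). intros y Hy Hy2. split; auto.
    unfold ball in Hy; simpl in Hy; unfold AbsRing_ball in Hy; simpl in Hy.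
    unfold abs, minus, plus, opp in Hy; simpl in Hy. apply Rabs_def2 in Hy. simpl in Hy. lra.
  - reflexivity.
  - intros x y [Hx1 Hx2] ->. exists (RInt g x c). split.
    + apply (RInt_correct (V:=R_CompleteNormedModule)), Hex; lra.
    + apply HP. apply ball_R.
      assert (RInt g a0 c <= RInt g x c) by (apply Hmono; lra).
      assert (RInt g x c <= l) by (apply Hub; exists x; split; [lra|auto]).
      apply Rabs_def1; lra.
Qed.

Lemma half_right (g : R -> R) c hi B : c < hi ->
  (forall x, c <= x < hi -> continuous g x) ->
  (forall x, c <= x < hi -> 0 <= g x) ->
  (forall b, c < b < hi -> RInt g c b <= B) ->
  exists l, is_RInt_gen g (at_point c) (at_left hi) l /\ l <= B.
Proof.
  intros Hlc Hc Hp HB.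
  set (E := fun y => exists b, c < b < hi /\ y = RInt g c b).
  assert (Hb : bound E) by (exists B; intros y [a [Ha ->]]; auto).
  assert (Hne : exists y, E y) by (exists (RInt g c ((hi+c)/2)); exists ((hi+c)/2); split; [lra|auto]).
  destruct (completeness E Hb Hne) as [l [Hub Hlub]].
  assert (Hex : forall a b, c <= a -> a <= b -> b < hi -> ex_RInt g a b).
  { intros a b H1 H2 H3. apply exRInt_cont; auto. intros; apply Hc; lra. }
  assert (Hmono : forall b b', c <= b -> b <= b' -> b' < hi -> RInt g c b <= RInt g c b').
  { intros b b' H1 H2 H3. rewrite <- (RInt_Chasles g c b b') by (apply Hex; lra).
    assert (0 <= RInt g b b'). { apply RInt_ge_0; auto. intros; apply Hp; lra. }
    unfold plus in *; simpl in *. lra. }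
  exists l. split.
  2:{ apply Hlub. intros y [a [Ha ->]]. auto. }
  intros P [eps HP].
  assert (Hexa : exists b0, c < b0 < hi /\ l - eps < RInt g c b0).
  { destruct (Rlt_dec (l - eps) (RInt g c ((hi+c)/2))) as [Hlt|Hge].
    - exists ((hi+c)/2); split; [lra|auto].
    - apply NNPP. intros Hn.
      assert (l <= l - eps).
      { apply Hlub. intros y [a [Ha ->]].
        destruct (Rle_dec (RInt g c a) (l - eps)) as [|Hr]; auto.
        exfalso; apply Hn; exists a; split; [auto|lra]. }
      destruct eps as [e He]; simpl in *; lra. }
  destruct Hexa as [b0 [Hb0 Hlb0]].
  apply Filter_prod with (Q := fun x => x = c) (R := fun y => b0 < y < hi).
  - reflexivity.
  - exists (mkposreal (hi - b0) ltac:(lra)). intros y Hy Hy2. split; auto.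
    unfold ball in Hy; simpl in Hy; unfold AbsRing_ball in Hy; simpl in Hy.
    unfold abs, minus, plus, opp in Hy; simpl in Hy. apply Rabs_def2 in Hy. simpl in Hy. lra.
  - intros x y -> [Hy1 Hy2]. exists (RInt g c y). split.
    + apply (RInt_correct (V:=R_CompleteNormedModule)), Hex; lra.
    + apply HP. apply ball_R.
      assert (RInt g c b0 <= RInt g c y) by (apply Hmono; lra).
      assert (RInt g c y <= l) by (apply Hub; exists y; split; [lra|auto]).
      apply Rabs_def1; lra.
Qed.
Lemma asin_deriv y : -1 < y < 1 -> is_derive asin y (/ sqrt (1 - y^2)).
Proof. intros H. apply is_derive_Reals. apply derive_pt_eq_1 with (derivable_pt_asin y H).
  rewrite derive_pt_asin. unfold Rsqr. replace (y^2) with (y*y) by ring. field.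
  apply Rgt_not_eq, sqrt_lt_R0. nra. Qed.

Lemma majorant_gen (g m M : R -> R) a c :
  a <= c -> (forall x, a <= x <= c -> continuous g x) ->
  (forall x, a <= x <= c -> is_derive M x (m x)) ->
  (forall x, a <= x <= c -> continuous m x) ->
  (forall x, a < x < c -> g x <= m x) -> RInt g a c <= M c - M a.
Proof.
  intros Hac Hg Hd Hm Hle.
  assert (HI : is_RInt m a c (minus (M c) (M a))).
  { apply (is_RInt_derive (V:=R_CompleteNormedModule)); intros x Hx; rewrite Rmin_left, Rmax_right in Hx by lra; auto. }
  replace (M c - M a) with (RInt m a c).
  2:{ apply (is_RInt_unique (V:=R_CompleteNormedModule)) in HI. rewrite HI. reflexivity. }
  apply RInt_le; auto. apply exRInt_cont; auto. exists (minus (M c) (M a)). exact HI.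
Qed.

Lemma asin_majorant (g : R -> R) k L a c : 0 < L -> -L < a -> a <= c -> c < L ->
  (forall x, a <= x <= c -> continuous g x) ->
  (forall x, a < x < c -> g x <= k * (/L * / sqrt (1 - (x/L)^2))) ->
  RInt g a c <= k * (asin (c/L) - asin (a/L)).
Proof.
  intros HL Ha Hac Hc Hg Hle.
  assert (Hr : forall x, a <= x <= c -> -1 < x/L < 1).
  { intros x Hx. split; [apply Rmult_lt_reg_r with L; [lra|]| apply Rmult_lt_reg_r with L; [lra|]];
    unfold Rdiv; rewrite Rmult_assoc, Rinv_l; lra. }
  replace (k * (asin (c/L) - asin (a/L))) with (k * asin (c/L) - k * asin (a/L)) by ring.
  apply (majorant_gen g (fun x => k * (/L * / sqrt (1 - (x/L)^2))) (fun x => k * asin (x/L))); auto.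
  - intros x Hx. 
    assert (H1 := asin_deriv (x/L) (Hr x Hx)).
    assert (H2 : is_derive (fun y => y / L) x (/L)).
    { auto_derive; [exact I| field; lra]. }
    assert (H3 := is_derive_comp asin (fun y => y/L) x _ _ H1 H2).
    assert (H4 := is_derive_scal _ x k _ H3).
    simpl in H4. unfold scal in H4; simpl in H4; unfold mult in H4; simpl in H4. exact H4.
  - intros x Hx. apply (ex_derive_continuous (K:=R_AbsRing) (V:=R_NormedModule)). auto_derive.
    assert (H := Hr x Hx). repeat split; try lra.
    + nra.
    + apply Rgt_not_eq, sqrt_lt_R0. nra.
Qed.

Lemma sqrt_majorant (g : R -> R) k L a c : -L < a -> a <= c ->
  (forall x, a <= x <= c -> continuous g x) ->
  (forall x, a < x < c -> g x <= k / sqrt (x + L)) ->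
  RInt g a c <= 2 * k * (sqrt (c + L) - sqrt (a + L)).
Proof.
  intros Ha Hac Hg Hle.
  replace (2 * k * (sqrt (c + L) - sqrt (a + L))) with (2*k*sqrt (c+L) - 2*k*sqrt (a+L)) by ring.
  apply (majorant_gen g (fun x => k / sqrt (x + L)) (fun x => 2*k*sqrt (x+L))); auto.
  - intros x Hx. auto_derive. { lra. }
    assert (0 < sqrt (x+L)) by (apply sqrt_lt_R0; lra). field. lra.
  - intros x Hx. apply (ex_derive_continuous (K:=R_AbsRing) (V:=R_NormedModule)). auto_derive.
    repeat split; try lra. apply Rgt_not_eq, sqrt_lt_R0. lra.
Qed.

Lemma inv_sqrt_le D u k : 0 < u -> 0 < D -> 0 < k -> u <= k^2 * D -> / sqrt D <= k / sqrt u.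
Proof.
  intros Hu HD Hk H.
  assert (Hsu : 0 < sqrt u) by (apply sqrt_lt_R0; auto).
  assert (HsD : 0 < sqrt D) by (apply sqrt_lt_R0; auto).
  replace (k / sqrt u) with (/ (sqrt u / k)) by (field; lra).
  apply Rinv_le_contravar. { apply Rdiv_lt_0_compat; auto. }
  assert (sqrt u <= k * sqrt D).
  { rewrite <- (sqrt_pow2 k) by lra. rewrite <- sqrt_mult by nra. apply sqrt_le_1_alt. lra. }
  apply Rmult_le_reg_r with k; auto. field_simplify; lra.
Qed.
Lemma pt_asin D k L x : 0 < L -> -L < x < L -> 0 < k -> 0 < D -> L^2 - x^2 <= k^2 * D ->
  / sqrt D <= k * (/L * / sqrt (1 - (x/L)^2)).
Proof.
  intros HL Hx Hk HD H.
  assert (Hu : 1 - (x/L)^2 = (L^2 - x^2) / L^2) by (field; lra).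
  assert (0 < L^2 - x^2) by nra.
  assert (0 < L^2) by nra.
  assert (0 < 1 - (x/L)^2) by (rewrite Hu; apply Rdiv_lt_0_compat; lra).
  assert (0 < sqrt (1 - (x/L)^2)) by (apply sqrt_lt_R0; lra).
  replace (k * (/L * / sqrt (1 - (x/L)^2))) with ((k/L) / sqrt (1 - (x/L)^2)) by (field; lra).
  apply inv_sqrt_le; auto.
  - apply Rdiv_lt_0_compat; lra.
  - rewrite Hu. replace ((k/L)^2 * D) with (k^2 * D / L^2) by (field; lra).
    unfold Rdiv. apply Rmult_le_compat_r; [left; apply Rinv_0_lt_compat; lra| lra].
Qed.

Lemma polyB L : 0 <= L <= 2 -> (2+L)^2 <= (1 + (3*L/8 - L^2/40))^2 * (4+L).
Proof. intros H.
  assert (E : (1 + (3*L/8 - L^2/40))^2 * (4+L) - (2+L)^2 = L^2 * (9/80 + L/64 - 13*L^2/800 + L^3/1600)) by field.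
  assert (0 <= 9/80 + L/64 - 13*L^2/800 + L^3/1600) by nra.
  assert (0 <= L^2) by nra. nra. Qed.

Lemma polyC L : 0 <= L <= 2 -> 2 * (3*L/8 - L^2/40)^2 <= (1 - L/4)^4 + L - 1.
Proof. intros H.
  assert (E : (1 - L/4)^4 + L - 1 - 2 * (3*L/8 - L^2/40)^2 = L^2 * (3/32 - L/40 + 17*L^2/6400)) by field.
  assert (0 <= 3/32 - L/40 + 17*L^2/6400) by nra.
  assert (0 <= L^2) by nra. nra. Qed.

Lemma exp_low4 lo : -4 <= lo -> (1 + lo/4)^4 <= exp lo.
Proof. intros H.
  assert (E : exp lo = exp (lo/4) ^ 4).
  { simpl. rewrite Rmult_1_r, <- !exp_plus. f_equal. field. }
  rewrite E. apply pow_incr. split; [lra|]. apply exp_ineq1_le. Qed.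

Theorem corollary2p5 :
  forall f0 lo hi : R,
    1 < f0 ->
    lo <= 0 -> 0 <= hi -> fpot lo = f0 -> fpot hi = f0 ->
    exists I : R,
      is_RInt_gen (beta_integrand f0) (at_right lo) (at_left hi) I /\
      / 2 * I <= PI / sqrt 2 + sqrt (f0 - 1).
Proof.
  intros f0 lo hi Hf0 Hlo Hhi Hflo Hfhi.
  assert (Hf1 : fpot 0 = 1) by (unfold fpot; rewrite exp_0; ring).
  assert (Hlo' : lo < 0) by (destruct Hlo as [ | -> ]; [auto| rewrite Hf1 in Hflo; lra]).
  assert (Hhi' : 0 < hi) by (destruct Hhi as [ | <- ]; [auto| rewrite Hf1 in Hfhi; lra]).
  set (L := - lo).
  assert (HL : 0 < L) by (unfold L; lra).
  set (g := beta_integrand f0).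
  assert (Hpos : forall x, lo < x < hi -> 0 < f0 - fpot x).
  { intros x Hx. destruct (Rle_dec x 0).
    - assert (H := chord_bound f0 lo x Hflo Hlo' ltac:(lra)).
      assert (0 < (x - lo) / - lo) by (apply Rdiv_lt_0_compat; lra). nra.
    - assert (H := right_bound f0 hi x Hfhi ltac:(lra)). nra. }
  assert (Hcont : forall x, lo < x < hi -> continuous g x).
  { intros x Hx. apply (ex_derive_continuous (K:=R_AbsRing) (V:=R_NormedModule)).
    unfold g, beta_integrand, fpot. assert (H := Hpos x Hx). unfold fpot in H. auto_derive.
    repeat split; try lra. apply Rgt_not_eq, sqrt_lt_R0. lra. }
  assert (Hnn : forall x, lo < x < hi -> 0 <= g x).
  { intros x Hx. left. apply Rinv_0_lt_compat, sqrt_lt_R0, Hpos, Hx. }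
  assert (Hs2 : sqrt 2 * sqrt 2 = 2) by (apply sqrt_sqrt; lra).
  assert (Hs2p : 0 < sqrt 2) by (apply sqrt_lt_R0; lra).
  destruct (half_right g 0 hi (sqrt 2 * (PI/2)) Hhi') as [l2 [Hl2 Hl2B]].
  { intros x Hx. apply Hcont; lra. }
  { intros x Hx. apply Hnn; lra. }
  { intros b Hb.
    assert (Hb1 : RInt g 0 b <= sqrt 2 * (asin (b / hi) - asin (0 / hi))).
    { apply asin_majorant; try lra.
      - intros x Hx; apply Hcont; lra.
      - intros x Hx. unfold g, beta_integrand. apply pt_asin; try lra.
        + apply Hpos; lra.
        + rewrite pow2_sqrt by lra. assert (H := right_bound f0 hi x Hfhi ltac:(lra)). lra. }
    assert (asin (0/hi) = 0) by (unfold Rdiv; rewrite Rmult_0_l; apply asin_0).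
    assert (Hasb := asin_bound (b/hi)).
    assert (sqrt 2 * (asin (b / hi) - asin (0 / hi)) <= sqrt 2 * (PI/2)) by (apply Rmult_le_compat_l; lra).
    lra. }
  assert (HPI2 : PI / sqrt 2 = sqrt 2 * PI / 2).
  { replace (PI / sqrt 2) with (PI * sqrt 2 / (sqrt 2 * sqrt 2)) by (field; lra). rewrite Hs2. field. }
  assert (HPI4 := PI_4). assert (HPI3 := PI2_3_2).
  assert (Hf0e : f0 - 1 = exp lo + L - 1) by (unfold fpot in Hflo; unfold L; lra).
  assert (Hsf : 0 < sqrt (f0 - 1)) by (apply sqrt_lt_R0; lra).
  assert (Hsf2 : sqrt (f0 - 1) ^ 2 = f0 - 1) by (apply pow2_sqrt; lra).
  assert (HChas : forall l1, is_RInt_gen g (at_right lo) (at_point 0) l1 ->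
     is_RInt_gen g (at_right lo) (at_left hi) (l1 + l2)).
  { intros l1 Hl1. exact (is_RInt_gen_Chasles g 0 l1 l2 Hl1 Hl2). }
  destruct (Rle_dec L 2) as [HL2|HL2].
  -
    set (kA := sqrt 2 * (2+L) / sqrt (4+L)).
    assert (Hq : sqrt (4+L) * sqrt (4+L) = 4+L) by (apply sqrt_sqrt; lra).
    assert (Hqp : 0 < sqrt (4+L)) by (apply sqrt_lt_R0; lra).
    assert (HkA : 0 < kA) by (unfold kA; apply Rdiv_lt_0_compat; [apply Rmult_lt_0_compat|]; lra).
    assert (HkA2 : kA^2 = 2*(2+L)^2/(4+L)).
    { unfold kA. replace ((sqrt 2 * (2 + L) / sqrt (4 + L)) ^ 2) with
        ((sqrt 2 * sqrt 2) * (2+L)^2 / (sqrt (4+L) * sqrt (4+L))) by (field; lra).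
      rewrite Hs2, Hq. reflexivity. }
    destruct (half_left g lo 0 (kA * (PI/2)) Hlo') as [l1 [Hl1 Hl1B]].
    { intros x Hx. apply Hcont; lra. }
    { intros x Hx. apply Hnn; lra. }
    { intros a Ha.
      assert (Hb1 : RInt g a 0 <= kA * (asin (0 / L) - asin (a / L))).
      { apply asin_majorant; try (unfold L; lra).
        - intros x Hx; apply Hcont; lra.
        - intros x Hx. unfold g, beta_integrand. apply pt_asin; try (unfold L; lra).
          + apply Hpos; lra.
          + assert (H := leftA_bound f0 lo x Hflo Hlo' ltac:(lra)).
            replace (4 - lo) with (4 + L) in H by (unfold L; ring).
            replace (2 - lo) with (2 + L) in H by (unfold L; ring).
            replace (lo^2) with (L^2) in H by (unfold L; ring).
            assert (0 <= L^2 - x^2) by (unfold L in *; nra).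
            apply Rle_trans with (kA^2 * ((4 + L) / (2 + L) ^ 2 * (L ^ 2 - x ^ 2) / 2)).
            * right. rewrite HkA2. field. lra.
            * apply Rmult_le_compat_l; [nra| lra]. }
      assert (asin (0/L) = 0) by (unfold Rdiv; rewrite Rmult_0_l; apply asin_0).
      assert (Hasb := asin_bound (a/L)).
      assert (kA * (asin (0 / L) - asin (a / L)) <= kA * (PI/2)) by (apply Rmult_le_compat_l; lra).
      lra. }
    exists (l1 + l2). split; [apply HChas; exact Hl1|].
    set (rho := 3*L/8 - L^2/40).
    assert (Hrho : 0 <= rho) by (unfold rho; nra).
    assert (HB := polyB L ltac:(lra)). assert (HC := polyC L ltac:(lra)).
    assert (HkAle : kA <= sqrt 2 * (1 + rho)).
    { unfold kA. unfold Rdiv. rewrite Rmult_assoc. apply Rmult_le_compat_l; [lra|].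
      assert (2 + L <= (1 + rho) * sqrt (4+L)).
      { rewrite <- (sqrt_pow2 (2+L)) by lra. rewrite <- (sqrt_pow2 (1+rho)) by lra.
        rewrite <- sqrt_mult by nra. apply sqrt_le_1_alt. exact HB. }
      apply Rmult_le_reg_r with (sqrt (4+L)); auto.
      rewrite Rmult_assoc, Rinv_l by lra. lra. }
    assert (Hsrho : sqrt 2 * rho <= sqrt (f0 - 1)).
    { rewrite <- (sqrt_pow2 rho) by lra. rewrite <- sqrt_mult by nra. apply sqrt_le_1_alt.
      rewrite Hf0e. assert (H := exp_low4 lo ltac:(unfold L in *; lra)).
      replace (1 + lo/4) with (1 - L/4) in H by (unfold L; field). unfold rho in *. lra. }
    assert (kA * (PI/2) <= sqrt 2 * (1 + rho) * (PI/2)) by (apply Rmult_le_compat_r; lra).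
    assert (sqrt 2 * rho * (PI/2) <= sqrt 2 * rho * 2) by (apply Rmult_le_compat_l; nra).
    rewrite HPI2. lra.
  -
    set (c0 := sqrt L / sqrt (f0 - 1)).
    assert (HsL : 0 < sqrt L) by (apply sqrt_lt_R0; lra).
    assert (HsL2 : sqrt L ^ 2 = L) by (apply pow2_sqrt; lra).
    assert (Hc0 : 0 < c0) by (unfold c0; apply Rdiv_lt_0_compat; lra).
    destruct (half_left g lo 0 (2 * c0 * sqrt L) Hlo') as [l1 [Hl1 Hl1B]].
    { intros x Hx. apply Hcont; lra. }
    { intros x Hx. apply Hnn; lra. }
    { intros a Ha.
      assert (Hb1 : RInt g a 0 <= 2 * c0 * (sqrt (0 + L) - sqrt (a + L))).
      { apply sqrt_majorant; try (unfold L; lra).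
        - intros x Hx; apply Hcont; lra.
        - intros x Hx. unfold g, beta_integrand. apply inv_sqrt_le; try (unfold L; lra).
          + apply Hpos; lra.
          + assert (H := chord_bound f0 lo x Hflo Hlo' ltac:(lra)).
            replace (-lo) with L in H by reflexivity.
            replace (x - lo) with (x + L) in H by (unfold L; ring).
            replace (c0^2) with (L / (f0 - 1)).
            2:{ unfold c0. unfold Rdiv. rewrite Rpow_mult_distr, pow_inv, HsL2, Hsf2. reflexivity. }
            apply Rle_trans with (L / (f0 - 1) * ((f0 - 1) * ((x + L) / L))).
            * right. field. lra.
            * apply Rmult_le_compat_l; [|lra]. apply Rdiv_le_0_compat; lra. }
      rewrite Rplus_0_l in Hb1.
      assert (0 <= sqrt (a + L)) by apply sqrt_pos.
      assert (0 < 2 * c0) by lra. nra. }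
    exists (l1 + l2). split; [apply HChas; exact Hl1|].
    assert (Hc0L : c0 * sqrt L = L / sqrt (f0 - 1)).
    { unfold c0. unfold Rdiv. rewrite Rmult_comm, <- Rmult_assoc.
      replace (sqrt L * sqrt L) with L by (symmetry; apply sqrt_sqrt; lra). reflexivity. }
    assert (HsfL : L - 1 <= sqrt (f0 - 1)^2) by (rewrite Hsf2, Hf0e; assert (H := exp_pos lo); lra).
    assert (Hs1 : 1 <= sqrt (f0 - 1)) by nra.
    assert (Hs243 : 4/3 < sqrt 2) by nra.
    assert (H2 : 2 < sqrt 2 * PI / 2) by nra.
    assert (HLs : L / sqrt (f0 - 1) <= 1 + sqrt (f0 - 1)).
    { apply Rmult_le_reg_r with (sqrt (f0 - 1)); auto. unfold Rdiv. rewrite Rmult_assoc, Rinv_l by lra. nra. }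
    rewrite HPI2. lra.
Qed.
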